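(* For all integers $m,n\ge1$, $$T_{2m-1,n}(q)=\sum_{r=0}^{m-1}(-1)^{n+r+1}\binom{2m-1}{r}\frac{(1-q^{m-r-\frac12})q^{(m-\frac12)n}}{(1-q)^{2m-1}(1+q^{m-r-\frac12})}+\sum_{r=0}^{m-1}(-1)^r\binom{2m-1}{r}\frac{(1-q^{(2n+1)(m-r-\frac12)})q^{rn}}{(1-q)^{2m-1}(1+q^{m-r-\frac12})}.$$
   Context: $q$ is an indeterminate and $q^{1/2}$ a fixed formal square root of $q$; identities are identities of rational functions in $q^{1/2}$. For integers $m,n\ge1$, $$T_{m,n}(q)=\sum_{k=1}^{n}(-1)^{n-k}\left(\frac{1-q^k}{1-q}\right)^{m}q^{\frac m2(n-k)}.$$ *)

(* Defs.v *)
From HB Require Import structures.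
From mathcomp Require Import all_boot all_order all_algebra.
From mathcomp Require Import fraction.
Set Implicit Arguments. Unset Strict Implicit. Unset Printing Implicit Defensive.
Import Order.TTheory GRing.Theory Num.Theory.
Local Open Scope ring_scope.

(* The field of rational functions in one indeterminate over Q; the
   indeterminate plays the role of the formal square root q^{1/2}. *)
Definition RF : fieldType := {fraction {poly rat}}.

Definition sq : RF := @FracField.tofrac _ ('X : {poly rat}).
Definition q : RF := sq ^+ 2.

(* T_{m,n}(q) = sum_{k=1}^n (-1)^(n-k) ((1-q^k)/(1-q))^m q^{(m/2)(n-k)},
   with q^{(m/2)(n-k)} = (q^{1/2})^(m(n-k)). *)
Definition T (m n : nat) : RF :=
  \sum_(1 <= k < n.+1)
    (-1) ^+ (n - k) * ((1 - q ^+ k) / (1 - q)) ^+ m * sq ^+ (m * (n - k)).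

(* Main.v *)
Require Import Defs.
From mathcomp Require Import all_boot all_order all_algebra.
From mathcomp Require Import fraction.
From mathcomp Require Import ring lra zify.
Import GRing.Theory.
Local Open Scope ring_scope.



Lemma shift_half (R : comNzRingType) (F : nat -> R) m :
  \sum_(m <= i < m + m) F i = \sum_(0 <= i < m) F (i + m)%N.
Proof. by rewrite -{1}[m]add0n big_addn addnK. Qed.

Lemma binsym (R : comNzRingType) (x : R) m : (1<=m)%N ->
  (1 - x)^+(2 * m-1) = \sum_(0<=r<m) (-1)^+r * ('C(2 * m-1,r))%:R * (x^+r - x^+(2 * m-1-r)).
Proof.
move=> hm.
have hM : (2 * m-1).+1 = (m + m)%N by lia.
rewrite exprBn hM -(big_mkord xpredT (fun i => ((-1) ^+ i * 1 ^+ (2 * m-1 - i) * x ^+ i) *+ 'C(2 * m-1, i))).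
rewrite (@big_cat_nat _ _ _ m) ?leq_addr //=.
rewrite shift_half [X in _ + X]big_nat_rev /= add0n.
rewrite -big_split /=; apply: eq_big_nat => i /andP[_ hi].
have e1 : ((m - i.+1 + m) = 2 * m-1-i)%N by lia.
have e2 : (2 * m-1 - (2 * m-1-i) = i)%N by lia.
have e4 : 'C(2 * m - 1, 2 * m - 1 - i) = 'C(2 * m - 1, i) by rewrite bin_sub //; lia.
rewrite e1 e2 e4 !expr1n !mulr1.
have e3 : ((-1) ^+ (2 * m-1-i) = - (-1)^+i :> R).
  have -> : (2 * m-1-i = 2 * (m-1-i) + i + 1)%N by lia.
  rewrite !exprD expr0 mulr1 -exprD addnn -mul2n exprM sqrrN !expr1n mul1r expr1 mulrN1 //.
rewrite e3; move: (x ^+ (2 * m - 1 - i)) ((-1) ^+ i : R) (x ^+ i) ('C(2 * m - 1, i)) => a b c k; ring.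
Qed.

Lemma alg_id (F : fieldType) (P c sg u t w z : F) : P != 0 -> 1 + u != 0 ->
  sg * c * ((1 - w ^+ 2 * u ^+ 3) * (z ^+ 2 * t ^+ 2) / (P * (1 + u))) +
  t ^+ 2 * u * (sg * c * ((1 - w ^+ 2 * u) * z ^+ 2 / (P * (1 + u)))) =
  sg * c * (z ^+ 2 * t ^+ 2 - z ^+ 2 * t ^+ 2 * (w ^+ 2 * u ^+ 2)) / P.
Proof. by move=> hP hD; field; rewrite hP hD. Qed.

Lemma gen1 (F : comNzRingType) (a b c d : F) : -1 * a * b * (c * d) = -(c * (a * b * d)).
Proof. ring. Qed.
Lemma gen2 (F : comNzRingType) (X s a b : F) : X - s * (a + b) = - (s * a) + (X - s * b).
Proof. ring. Qed.
Lemma gen3 (F : fieldType) (e C a sM sMn D : F) :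
  -1 * e * C * (a * (sM * sMn) / D) = - (sM * (e * C * (a * sMn / D))).
Proof. ring. Qed.

Lemma sqX k : sq ^+ k = FracField.tofrac ('X^k : {poly rat}).
Proof. by rewrite /sq rmorphXn. Qed.

Lemma one_sub_q_neq0 : 1 - q != 0.
Proof.
rewrite /q sqX -tofrac1 -tofracB tofrac_eq0.
apply/eqP => h; have := congr1 (fun p => p.[0]) h.
rewrite /= !hornerE; by move/eqP; rewrite oner_eq0.
Qed.

Lemma one_add_sq_neq0 d : (1 <= d)%N -> 1 + sq ^+ d != 0.
Proof.
move=> hd; rewrite sqX -tofrac1 -tofracD tofrac_eq0.
apply/eqP => h; have := congr1 (fun p => p.[0]) h.
rewrite /= !hornerE expr0n /= eqn0Ngt hd /= addr0 => /eqP; by rewrite oner_eq0.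
Qed.

Lemma term_id (P c sg : RF) (r d n : nat) : P != 0 -> (1 <= d)%N ->
 sg * c * ((1 - sq ^+ ((2 * n.+1 + 1) * d)) * sq ^+ (2 * (r * n.+1)) / (P * (1 + sq ^+ d)))
 + sq ^+ (r * 2 + d) * (sg * c * ((1 - sq ^+ ((2 * n + 1) * d)) * sq ^+ (2 * (r * n)) / (P * (1 + sq ^+ d))))
 = sg * c * ((q ^+ n.+1) ^+ r - (q ^+ n.+1) ^+ (r + d)) / P.
Proof.
move=> hP hd.
have hD := @one_add_sq_neq0 d hd.
rewrite /q -!exprM.
have -> : sq ^+ ((2 * n.+1 + 1) * d) = ((sq ^+ d) ^+ n) ^+ 2 * (sq ^+ d) ^+ 3.
  by rewrite -!exprM -exprD; congr (_ ^+ _); lia.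
have -> : sq ^+ (2 * (r * n.+1)) = ((sq ^+ r) ^+ n) ^+ 2 * (sq ^+ r) ^+ 2.
  by rewrite -!exprM -exprD; congr (_ ^+ _); lia.
have -> : sq ^+ (r * 2 + d) = (sq ^+ r) ^+ 2 * sq ^+ d.
  by rewrite -!exprM -exprD; congr (_ ^+ _); lia.
have -> : sq ^+ ((2 * n + 1) * d) = ((sq ^+ d) ^+ n) ^+ 2 * sq ^+ d.
  by rewrite -!exprM -exprD; congr (_ ^+ _); lia.
have -> : sq ^+ (2 * (r * n)) = ((sq ^+ r) ^+ n) ^+ 2.
  by rewrite -!exprM; congr (_ ^+ _); lia.
have -> : sq ^+ (2 * (n.+1 * r)) = ((sq ^+ r) ^+ n) ^+ 2 * (sq ^+ r) ^+ 2.
  by rewrite -!exprM -exprD; congr (_ ^+ _); lia.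
have -> : sq ^+ (2 * (n.+1 * (r + d))) =
   ((sq ^+ r) ^+ n) ^+ 2 * (sq ^+ r) ^+ 2 * (((sq ^+ d) ^+ n) ^+ 2 * (sq ^+ d) ^+ 2).
  by rewrite -!exprM -!exprD; congr (_ ^+ _); lia.
move: hD; move: (sq ^+ d) (sq ^+ r) => u t hD.
move: (u ^+ n) (t ^+ n) => w z.
exact: alg_id.
Qed.

Lemma T_step M n : T M n.+1 = ((1 - q ^+ n.+1) / (1 - q)) ^+ M - sq ^+ M * T M n.
Proof.
rewrite /T big_nat_recr //= subnn expr0 mul1r muln0 expr0 mulr1 addrC; congr (_ + _).
rewrite mulr_sumr -sumrN; apply: eq_big_nat => k /andP[_ hk].
rewrite subSn; last by []. by rewrite exprS mulnS exprD gen1.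
Qed.

Theorem lemma2p3 (m n : nat) : (1 <= m)%N -> (1 <= n)%N ->
  T (2 * m - 1) n =
    \sum_(0 <= r < m)
      (-1) ^+ (n + r + 1) * ('C(2 * m - 1, r))%:R *
        ((1 - sq ^+ (2 * (m - r) - 1)) * sq ^+ ((2 * m - 1) * n)
         / ((1 - q) ^+ (2 * m - 1) * (1 + sq ^+ (2 * (m - r) - 1))))
  + \sum_(0 <= r < m)
      (-1) ^+ r * ('C(2 * m - 1, r))%:R *
        ((1 - sq ^+ ((2 * n + 1) * (2 * (m - r) - 1))) * sq ^+ (2 * (r * n))
         / ((1 - q) ^+ (2 * m - 1) * (1 + sq ^+ (2 * (m - r) - 1)))).
Proof.
move=> hm _.
elim: n => [|n IH].
  rewrite /T big_geq // -big_split big1 // => r _.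
  by rewrite !muln0 !add0n mul1n expr0 addn1 exprS mulN1r /= !mulNr addNr.
rewrite T_step IH gen2; congr (_ + _).
  rewrite mulr_sumr -sumrN; apply: eq_bigr => r _.
  by rewrite !addSn exprS mulnS (exprD sq) gen3.
apply/eqP; rewrite subr_eq eq_sym; apply/eqP.
rewrite mulr_sumr -big_split /= expr_div_n (@binsym _ (q ^+ n.+1) m hm) mulr_suml.
apply: eq_big_nat => r /andP[_ hr].
have hMr : (2 * m - 1 - r = r + (2 * (m - r) - 1))%N by lia.
have hM : (2 * m - 1 = r * 2 + (2 * (m - r) - 1))%N by lia.
have hd : (1 <= 2 * (m - r) - 1)%N by lia.
rewrite hMr hM; move: hd; move: (2 * (m - r) - 1)%N => d hd.
apply: term_id => //; exact: expf_neq0 one_sub_q_neq0.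
Qed.
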